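(* Let $\mathcal{I}$ be an ideal of the multiloop algebra $\mathcal{L}$, and let $Y=\sum_{\bar r\in G}\sum_{n=1}^{\dim\mathfrak{g}_{\bar r}} x_{\bar r n}\otimes \pi_{\bar r n}(Y)\in\mathcal{I}$. Then $$x_{\bar k i}\otimes t^{k-\ell}\pi_{\bar\ell j}(Y)\in\mathcal{I}$$ for all $k,\ell\in\mathbb{Z}^N$, $1\le i\le \dim\mathfrak{g}_{\bar k}$ and $1\le j\le\dim\mathfrak{g}_{\bar\ell}$.
   Context: $F$ is an algebraically closed field of characteristic zero; $\mathfrak{g}$ is a finite-dimensional simple Lie algebra over $F$; $\sigma_1,\dots,\sigma_N$ are pairwise commuting automorphisms of $\mathfrak{g}$ of finite orders $m_1,\dots,m_N$; for each $i$, $\xi_i\in F$ is a fixed primitive $m_i$-th root of unity. Let $G=\mathbb{Z}/m_1\mathbb{Z}\times\cdots\times\mathbb{Z}/m_N\mathbb{Z}$ and write $\bar k$ for the image of $k\in\mathbb{Z}^N$ in $G$. Set $\mathfrak{g}_{\bar k}=\{x\in\mathfrak{g}: \sigma_i x=\xi_i^{k_i}x \text{ for } i=1,\dots,N\}$, so $\mathfrak{g}=\bigoplus_{\bar k\in G}\mathfrak{g}_{\bar k}$. Let $R=F[t_1^{\pm1},\dots,t_N^{\pm1}]$, $t^k=t_1^{k_1}\cdots t_N^{k_N}$, $R_{\bar 0}=F[t_1^{\pm m_1},\dots,t_N^{\pm m_N}]$ and $R_{\bar k}=t^kR_{\bar 0}$ (so $R=\bigoplus_{\bar k\in G}R_{\bar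 k}$). The multiloop algebra is $\mathcal{L}=\mathcal{L}(\mathfrak{g};\sigma_1,\dots,\sigma_N)=\bigoplus_{k\in\mathbb{Z}^N}\mathfrak{g}_{\bar k}\otimes Ft^k=\bigoplus_{\bar k\in G}\mathfrak{g}_{\bar k}\otimes R_{\bar k}\subseteq \mathfrak{g}\otimes R$, with bracket $[x\otimes f,y\otimes g]=[x,y]\otimes fg$. For each $\bar k\in G$ fix a basis $\{x_{\bar k j}: j=1,\dots,\dim\mathfrak{g}_{\bar k}\}$ of $\mathfrak{g}_{\bar k}$, so $\mathcal{L}=\bigoplus_{\bar k}\bigoplus_j Fx_{\bar kj}\otimes R_{\bar k}$; let $\pi_{\bar kj}:\mathcal{L}\to R_{\bar k}$ be the projection onto the summand $Fx_{\bar kj}\otimes R_{\bar k}$ followed by the identification $x_{\bar kj}\otimes f\mapsto f$. *)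

(* Defs.v *)
From HB Require Import structures.
From mathcomp Require Import all_boot all_order all_algebra.
Set Implicit Arguments. Unset Strict Implicit. Unset Printing Implicit Defensive.
Import Order.TTheory GRing.Theory Num.Theory.
Local Open Scope ring_scope.

(* Z^N, the exponent lattice of Laurent monomials t^k. *)
Definition Zn (N : nat) := {ffun 'I_N -> int}.

Definition is_lie_bracket (F : fieldType) (g : vectType F) (br : g -> g -> g) : Prop :=
  [/\ forall a x y z, br (a *: x + y) z = a *: br x z + br y z,
      forall a x y z, br z (a *: x + y) = a *: br z x + br z y,
      forall x, br x x = 0 &
      forall x y z, br x (br y z) + br y (br z x) + br z (br x y) = 0].

Definition lie_ideal (F : fieldType) (g : vectType F) (br : g -> g -> g)
  (U : {vspace g}) : Prop := forall x u, u \in U -> br x u \in U.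

Definition simple_lie (F : fieldType) (g : vectType F) (br : g -> g -> g) : Prop :=
  [/\ is_lie_bracket br, (exists x y, br x y != 0) &
      forall U : {vspace g}, lie_ideal br U -> U = 0%VS \/ U = fullv].

Definition lie_aut (F : fieldType) (g : vectType F) (br : g -> g -> g)
  (s : 'End(g)) : Prop :=
  lker s = 0%VS /\ forall x y, s (br x y) = br (s x) (s y).

Definition has_order (F : fieldType) (g : vectType F) (s : 'End(g)) (m : nat) : Prop :=
  [/\ (0 < m)%N, (forall x, iter m (fun v => s v) x = x) &
      forall k, (0 < k < m)%N -> exists x, iter k (fun v => s v) x != x].

Definition grade (F : fieldType) (g : vectType F) (N : nat)
  (sigma : 'I_N -> 'End(g)) (xi : 'I_N -> F) (k : Zn N) : {vspace g} :=
  (\bigcap_(i < N) passmx.leigenspace (sigma i) (xi i ^ k i))%VS.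

(* canonical representative of \bar k in G = prod Z/m_i *)
Definition cls (N : nat) (m : 'I_N -> nat) (k : Zn N) : Zn N :=
  [ffun i => (k i %% (m i)%:Z)%Z].

(* Elements of g (x) R are finitely supported maps Z^N -> g, k |-> coefficient of t^k. *)
Definition supported (F : fieldType) (g : vectType F) (N : nat)
  (X : Zn N -> g) (s : seq (Zn N)) : Prop := forall k, k \notin s -> X k = 0.

Definition inLoop (F : fieldType) (g : vectType F) (N : nat)
  (sigma : 'I_N -> 'End(g)) (xi : 'I_N -> F) (X : Zn N -> g) : Prop :=
  (exists s, supported X s) /\ forall k, X k \in grade sigma xi k.

(* bracket [X, Y] in g (x) R, computed from support lists s1 of X and s2 of Y *)
Definition loop_br (F : fieldType) (g : vectType F) (N : nat) (br : g -> g -> g)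
  (s1 s2 : seq (Zn N)) (X Y : Zn N -> g) : Zn N -> g :=
  fun k => \sum_(a <- undup s1) \sum_(b <- undup s2 | a + b == k) br (X a) (Y b).

Definition loop_ideal (F : fieldType) (g : vectType F) (N : nat) (br : g -> g -> g)
  (sigma : 'I_N -> 'End(g)) (xi : 'I_N -> F) (I : (Zn N -> g) -> Prop) : Prop :=
  [/\ forall X, I X -> inLoop sigma xi X,
      I (fun _ => 0),
      forall X Y, I X -> I Y -> I (fun k => X k + Y k),
      forall (c : F) X, I X -> I (fun k => c *: X k) &
      forall X Y s1 s2, inLoop sigma xi X -> supported X s1 ->
        I Y -> supported Y s2 -> I (loop_br br s1 s2 X Y)].

(* pi_{r j}(Y) in R_r, as a map Z^N -> F (coefficient of t^a);
   j indexes the basis B r of g_r (0-based). *)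
Definition pcoord (F : fieldType) (g : vectType F) (N : nat) (m : 'I_N -> nat)
  (B : Zn N -> seq g) (r : Zn N) (j : 'I_(size (B r))) (Y : Zn N -> g) : Zn N -> F :=
  fun a => if cls m a == r then coord (in_tuple (B r)) j (Y a) else 0.
Arguments pcoord {F g N} m B r j Y _.

(* Main.v *)
Require Import Defs.
From HB Require Import structures.
From mathcomp Require Import all_boot all_order all_algebra.
From Stdlib Require Import Classical Lia FunctionalExtensionality.
Set Implicit Arguments. Unset Strict Implicit. Unset Printing Implicit Defensive.
Import Order.TTheory GRing.Theory Num.Theory.
Local Open Scope ring_scope.

Lemma stable_eigvec (F : closedFieldType) (V : vectType F) (R : 'End(V))
  (W : {vspace V}) : (R @: W <= W)%VS -> W != 0%VS ->
  exists l w, [/\ w \in W, w != 0 & R w = l *: w].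
Proof.
move=> RW W0.
set r := \dim W; set X := vbasis W.
have r0 : (0 < r)%N by rewrite lt0n dimv_eq0.
pose C : 'M[F]_r := \matrix_(j, i) coord X i (R X`_j).
have : size (char_poly C) != 1%N by rewrite size_char_poly -(prednK r0).
case/closed_rootP=> l; rewrite -eigenvalue_root_char => /eigenvalueP[v vC v0].
pose w := \sum_j v 0 j *: X`_j.
have XW (j : 'I_r) : X`_j \in W by apply: vbasis_mem; rewrite mem_nth // size_tuple.
exists l, w; split.
- by apply: memv_suml => j _; apply: memvZ.
- apply: contra v0 => /eqP w0; apply/eqP/rowP => j; rewrite mxE.
  by have /freeP := basis_free (vbasisP W); move/(_ (fun j => v 0 j) w0 j).
rewrite linear_sum /=.
have RX (j : 'I_r) : R X`_j = \sum_i C j i *: X`_i.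
  rewrite {1}(coord_vbasis (_ : R X`_j \in W)); last first.
    by apply: (subvP RW); apply: memv_img.
  by apply: eq_bigr => i _; rewrite mxE.
rewrite (eq_bigr (fun j => \sum_i (v 0 j * C j i) *: X`_i)); last first.
  by move=> j _; rewrite linearZ /= RX scaler_sumr; apply: eq_bigr => i _; rewrite scalerA.
rewrite exchange_big /= /w scaler_sumr; apply: eq_bigr => i _.
rewrite -scaler_suml scalerA; congr (_ *: _).
have := congr1 (fun M : 'rV_r => M 0 i) vC; rewrite /= !mxE => <-.
by apply: eq_bigr => j _; rewrite mxE.
Qed.

Lemma pred_vspace (K : fieldType) (V : vectType K) (P : V -> Prop) :
  P 0 -> (forall x y, P x -> P y -> P (x + y)) ->
  (forall c x, P x -> P (c *: x)) ->
  exists U : {vspace V}, forall x, x \in U <-> P x.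
Proof.
move=> P0 PD PZ.
suff H : forall k (U : {vspace V}), (\dim {:V} - \dim U <= k)%N ->
    (forall x, x \in U -> P x) -> exists U' : {vspace V}, forall x, x \in U' <-> P x.
  by apply: (H _ 0%VS (leqnn _)) => x; rewrite memv0 => /eqP ->.
elim=> [|k IH] U hk hU.
- exists U => x; split; first exact: hU.
  move=> Px; have: (U == fullv)%VS.
    by rewrite eqEdim subvf /= -subn_eq0 -leqn0.
  by move/eqP => ->; rewrite memvf.
- case: (classic (exists x, P x /\ x \notin U)) => [[x [Px xU]]|].
    apply: (IH (U + <[x]>)%VS).
      have lt : (\dim U < \dim (U + <[x]>)%VS)%N.
        rewrite ltn_neqAle (dimv_leqif_sup (addvSl U <[x]>)).
        rewrite dimvS ?addvSl // andbT; apply: contra xU => /subvP sub; apply: sub.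
        by have := memv_add (mem0v U) (memv_line x); rewrite add0r.
      have le := dimvS (subvf (U + <[x]>)%VS).
      move: hk; rewrite !leq_subLR => hk; apply: leq_trans hk _.
      by rewrite addnS -addSn leq_add2r.
    move=> y /memv_addP[u uU [z /vlineP[c ->] ->]].
    by apply: PD; [apply: hU | apply: PZ].
  move=> nex; exists U => x; split; first exact: hU.
  move=> Px; apply: NNPP => xU; apply: nex; exists x; split=> //.
  exact/negP.
Qed.

Lemma lfun_of (K : fieldType) (V W : vectType K) (f : V -> W) :
  linear f -> exists phi : 'Hom(V, W), forall v, phi v = f v.
Proof.
move=> lf; pose fL : {linear V -> W} := HB.pack f (GRing.isLinear.Build _ _ _ _ f lf).
by exists (linfun fL) => v; rewrite lfunE.
Qed.

Lemma line_coord (K : fieldType) (V : vectType K) (z w : V) :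
  w \in <[z]>%VS -> w = coord [tuple z] 0 w *: z.
Proof.
move=> wz; rewrite {1}(@coord_span _ _ _ [tuple z] w); first by rewrite big_ord1.
by rewrite span_seq1.
Qed.

Lemma dim_rV (K : fieldType) r : \dim {: 'rV[K]_r} = r.
Proof. by rewrite dimvf /dim /= mul1n. Qed.

Section Burnside.
Variables (F : closedFieldType) (V : vectType F) (A : 'End(V) -> Prop).
Hypothesis A_add : forall f g, A f -> A g -> A (f + g).
Hypothesis A_scale : forall c f, A f -> A (c *: f).
Hypothesis A_comp : forall f g, A f -> A g -> A (f \o g)%VF.
Hypothesis A_nz : exists f, A f /\ f != 0.
Hypothesis A_irr : forall U : {vspace V},
  (forall f u, A f -> u \in U -> f u \in U) -> U = 0%VS \/ U = fullv.

Lemma A0 : A 0.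
Proof. by case: A_nz => f [Af _]; rewrite -(scale0r f); apply: A_scale. Qed.

Lemma lfun_eq0 (f : 'End(V)) : (forall v, f v = 0) -> f = 0.
Proof. by move=> h; apply/lfunP => v; rewrite h zero_lfunE. Qed.

Lemma A_ann v : v != 0 -> exists f, A f /\ f v != 0.
Proof.
move=> v0.
have [U hU] : exists U : {vspace V}, forall w, w \in U <-> forall f, A f -> f w = 0.
  apply: pred_vspace.
  - by move=> f _; rewrite linear0.
  - by move=> x y hx hy f Af; rewrite linearD /= hx ?hy ?addr0.
  - by move=> c x hx f Af; rewrite linearZ /= hx ?scaler0.
case: (A_irr (U := U)).
- move=> f u Af /hU uU; apply/hU => g Ag.
  by rewrite -comp_lfunE; apply: uU; apply: A_comp.
- move=> U0; apply: NNPP => nex; move: v0; rewrite -memv0 -U0.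
  move/negP; apply; apply/hU => f Af; apply/eqP; apply: NNPP => fv.
  by apply: nex; exists f; split=> //; apply/negP.
- move=> Uf; case: A_nz => f [Af /negP []].
  apply/eqP/lfun_eq0 => w; have /hU : w \in U by rewrite Uf memvf.
  by apply.
Qed.

Lemma A_trans v : v != 0 -> forall w, exists f, A f /\ f v = w.
Proof.
move=> v0.
have [U hU] : exists U : {vspace V}, forall w, w \in U <-> exists f, A f /\ w = f v.
  apply: pred_vspace.
  - by exists 0; split; [apply: A0 | rewrite zero_lfunE].
  - move=> x y [f [Af ->]] [g [Ag ->]].
    by exists (f + g); split; [apply: A_add | rewrite add_lfunE].
  - move=> c x [f [Af ->]].
    by exists (c *: f); split; [apply: A_scale | rewrite scale_lfunE].
case: (A_irr (U := U)).
- move=> f u Af /hU [g [Ag ->]]; apply/hU.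
  by exists (f \o g)%VF; split; [apply: A_comp | rewrite comp_lfunE].
- move=> U0; have [f [Af fv]] := A_ann v0; move: fv; rewrite -memv0 -U0.
  by move/negP => h; exfalso; apply: h; apply/hU; exists f.
- move=> Uf w; have /hU [f [Af ->]] : w \in U by rewrite Uf memvf.
  by exists f.
Qed.

Lemma limg_eq0 (f : 'End(V)) : limg f = 0%VS -> f = 0.
Proof.
move=> h; apply: lfun_eq0 => v; apply/eqP; rewrite -memv0 -h.
by apply: memv_img; apply: memvf.
Qed.

Lemma A_minrank : exists T, [/\ A T, T != 0 &
  forall T', A T' -> T' != 0 -> (\dim (limg T) <= \dim (limg T'))%N].
Proof.
suff H : forall n T, A T -> T != 0 -> (\dim (limg T) <= n)%N -> exists T, [/\ A T, T != 0 &
  forall T', A T' -> T' != 0 -> (\dim (limg T) <= \dim (limg T'))%N].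
  by case: A_nz => T [AT T0]; apply: (H _ T AT T0 (leqnn _)).
elim=> [|n IH] T AT T0 hn;
  (case: (classic (exists T', [/\ A T', T' != 0 & (\dim (limg T') < \dim (limg T))%N]))
    => [[T' [AT' T'0 lt]]|nex]).
- by move: (leq_trans lt hn); rewrite ltn0.
- exists T; split=> // T' AT' T'0; rewrite leqNgt; apply/negP => lt.
  by apply: nex; exists T'.
- by apply: (IH T' AT' T'0); rewrite -ltnS; apply: leq_trans lt hn.
- exists T; split=> // T' AT' T'0; rewrite leqNgt; apply/negP => lt.
  by apply: nex; exists T'.
Qed.

Variable T : 'End(V).
Hypothesis AT : A T.
Hypothesis T0 : T != 0.
Hypothesis Tmin : forall T', A T' -> T' != 0 -> (\dim (limg T) <= \dim (limg T'))%N.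

Lemma TST S : A S -> exists l, (T \o S \o T)%VF = l *: T.
Proof.
move=> AS.
pose R := (T \o S)%VF.
have RW : (R @: limg T <= limg T)%VS.
  apply/subvP => _ /memv_imgP[w /memv_imgP[v _ ->] ->].
  by rewrite comp_lfunE; apply: memv_img; apply: memvf.
have W0 : limg T != 0%VS by apply: contra T0 => /eqP /limg_eq0 ->.
have [l [w [wW w0 Rw]]] := stable_eigvec RW W0.
exists l.
pose Rl : 'End(V) := R - l *: \1%VF.
pose M := (Rl \o T)%VF.
have ME : M = (T \o S \o T)%VF + (- l) *: T.
  apply/lfunP => v; rewrite !(comp_lfunE, add_lfunE, scale_lfunE, opp_lfunE, id_lfunE).
  by rewrite scaleNr.
have AM : A M by rewrite ME; apply: A_add; [apply: A_comp => //; apply: A_comp | apply: A_scale].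
have ltM : (\dim (limg M) < \dim (limg T))%N.
  rewrite /M limg_comp.
  have := limg_ker_dim Rl (limg T).
  have : (0 < \dim (limg T :&: lker Rl))%N.
    rewrite lt0n dimv_eq0; apply/negP => /eqP h.
    have : w \in (limg T :&: lker Rl)%VS.
      rewrite memv_cap wW memv_ker !(add_lfunE, opp_lfunE, scale_lfunE, id_lfunE) Rw.
      by rewrite subrr eqxx.
    by rewrite h memv0 (negPf w0).
  move=> pos <-; rewrite -[X in (X < _)%N]add0n ltn_add2r //.
case: (eqVneq M 0) => [M0|Mn0].
  by apply/eqP; rewrite -subr_eq0 -scaleNr -ME M0.
by have := Tmin AM Mn0; rewrite leqNgt ltM.
Qed.

Lemma T_rank1 : (\dim (limg T) <= 1)%N.
Proof.
rewrite leqNgt; apply/negP => h2.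
have [x] := lfunPn T0; rewrite zero_lfunE => Tx.
have [y Ty] : exists y, T y \notin <[T x]>%VS.
  apply: NNPP => nex.
  have sub : (limg T <= <[T x]>)%VS.
    apply/subvP => _ /memv_imgP[y _ ->]; apply: NNPP => ny; apply: nex; exists y.
    by apply/negP.
  by move: (dimvS sub); rewrite dim_vline Tx leqNgt h2.
have [S [AS STx]] := A_trans Tx y.
have [l hl] := TST AS.
move: Ty; have := congr1 (fun f : 'End(V) => f x) hl.
rewrite /= !comp_lfunE scale_lfunE STx => ->.
by rewrite memvZ ?memv_line.
Qed.

Lemma rank1_in (z : V) (h : 'End(V)) : (forall v, h v \in <[z]>%VS) -> A h.
Proof.
move=> hz; case: (eqVneq z 0) => [z0|z0].
  have -> : h = 0 by apply: lfun_eq0 => v; have := hz v; rewrite z0 memv0 => /eqP.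
  exact: A0.
have [x] := lfunPn T0; rewrite zero_lfunE => Tx.
set u := T x.
have Tline v : T v \in <[u]>%VS.
  have sub : (<[u]> <= limg T)%VS by rewrite -memvE; apply: memv_img; apply: memvf.
  have : (<[u]> == limg T)%VS.
    by rewrite eqEdim sub dim_vline Tx; apply: T_rank1.
  by move/eqP => ->; apply: memv_img; apply: memvf.
have [a [Aa au]] := A_trans Tx z.
pose Zp (f : 'End(V)) := forall v, f v \in <[z]>%VS.
have [Zs hZ] : exists U : {vspace 'End(V)}, forall f, f \in U <-> Zp f.
  apply: pred_vspace.
  - by move=> v; rewrite zero_lfunE mem0v.
  - by move=> f g hf hg v; rewrite add_lfunE memvD.
  - by move=> c f hf v; rewrite scale_lfunE memvZ.
have [Ds hD] : exists U : {vspace 'End(V)}, forall f, f \in U <-> Zp f /\ A f.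
  apply: pred_vspace.
  - by split; [move=> v; rewrite zero_lfunE mem0v | apply: A0].
  - move=> f g [hf Af] [hg Ag]; split; last by apply: A_add.
    by move=> v; rewrite add_lfunE memvD.
  - move=> c f [hf Af]; split; last by apply: A_scale.
    by move=> v; rewrite scale_lfunE memvZ.
have [Ks hK] : exists U : {vspace V}, forall w, w \in U <-> forall f, Zp f /\ A f -> f w = 0.
  apply: pred_vspace.
  - by move=> f _; rewrite linear0.
  - by move=> x1 y1 hx hy f Af; rewrite linearD /= hx ?hy ?addr0.
  - by move=> c x1 hx f Af; rewrite linearZ /= hx ?scaler0.
have Ks0 : Ks = 0%VS.
  case: (A_irr (U := Ks)) => //.
    move=> b v Ab /hK vK; apply/hK => f [Zf Af].
    rewrite -comp_lfunE; apply: vK; split; last by apply: A_comp.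
    by move=> w; rewrite comp_lfunE.
  move=> Kf; have : x \in Ks by rewrite Kf memvf.
  move/hK/(_ (a \o T)%VF); rewrite comp_lfunE -/u au => h0.
  case/negP: z0; apply/eqP; apply: h0; split; last by apply: A_comp.
  move=> v; rewrite comp_lfunE (line_coord (Tline v)) linearZ /= au.
  by rewrite memvZ ?memv_line.
set n := \dim {:V}.
set e := vbasis {:V}.
have espan : <<e>>%VS = fullv by rewrite (span_basis (vbasisP _)).
have [Psi hPsi] : exists Psi : 'Hom('End(V), 'rV[F]_n),
    forall f, Psi f = \row_i coord [tuple z] 0 (f e`_i).
  apply: lfun_of.
  move=> c f g; apply/rowP => i; rewrite !mxE add_lfunE scale_lfunE.
  by rewrite linearD linearZ.
have dZ : (\dim Zs <= n)%N.
  rewrite -(@limg_dim_eq _ _ _ Psi); last first.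
    apply/eqP; rewrite -subv0; apply/subvP => f; rewrite memv_cap memv_ker memv0.
    case/andP => /hZ Zf /eqP; rewrite hPsi => P0; apply/eqP.
    apply/(fullv_lfunP _ _ espan) => w /(nthP 0)[i ilt <-].
    rewrite zero_lfunE (line_coord (Zf _)).
    have ilt' : (i < n)%N by move: ilt; rewrite size_tuple.
    have := congr1 (fun M : 'rV_ _ => M 0 (Ordinal ilt')) P0; rewrite !mxE /= => ->.
    by rewrite scale0r.
  by apply: leq_trans (dimvS (subvf _)) _; rewrite dim_rV.
set r := \dim Ds.
set hs := vbasis Ds.
have [Phi hPhi] : exists Phi : 'Hom(V, 'rV[F]_r),
    forall v, Phi v = \row_k coord [tuple z] 0 (hs`_k v).
  apply: lfun_of.
  move=> c v w; apply/rowP => k; rewrite !mxE.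
  by rewrite linearP /= linearP.
have dD : (n <= r)%N.
  rewrite /n -(@limg_dim_eq _ _ _ Phi fullv).
    by apply: leq_trans (dimvS (subvf _)) _; rewrite dim_rV.
  apply/eqP; rewrite -subv0; apply/subvP => v; rewrite memv_cap memv_ker memv0.
  case/andP => _ /eqP; rewrite hPhi => P0.
  have hsv (k : 'I_r) : hs`_k v = 0.
    have hk : hs`_k \in Ds by apply: vbasis_mem; rewrite mem_nth // size_tuple.
    rewrite (line_coord (proj1 (proj1 (hD _) hk) v)).
    have := congr1 (fun M : 'rV_ _ => M 0 k) P0; rewrite !mxE /= => ->.
    by rewrite scale0r.
  have : v \in Ks.
    apply/hK => f /hD fD; rewrite (coord_vbasis fD) sum_lfunE.
    by rewrite big1 // => k _; rewrite scale_lfunE hsv scaler0.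
  by rewrite Ks0 memv0.
have DZ : (Ds <= Zs)%VS by apply/subvP => f /hD [Zf _]; apply/hZ.
have : (Ds == Zs)%VS by rewrite eqEdim DZ (leq_trans dZ dD).
move/eqP => DZe.
by have /hD[] : h \in Ds by rewrite DZe; apply/hZ.
Qed.

End Burnside.

Lemma dvd_aux (M u c : nat) : (u < M)%N -> (c < M)%N -> (M %| M - u + c)%N = (c == u).
Proof.
move=> uM cM; case: (leqP u c) => uc.
  have -> : (M - u + c = M + (c - u))%N.
    by move: uM uc => /ssrnat.ltP h1 /ssrnat.leP h2; rewrite -!minusE -!plusE; lia.
  rewrite dvdn_addr //; apply/idP/eqP => [d|->]; last by rewrite subnn dvdn0.
  case: (posnP (c - u)) => [/eqP|p].
    by rewrite subn_eq0 => h; apply/eqP; rewrite eqn_leq h uc.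
  have := dvdn_leq p d; rewrite leqNgt => /negP []. 
  by move: cM => /ssrnat.ltP h1; apply/ssrnat.ltP; rewrite -!minusE; lia.
rewrite ltn_eqF //; apply/negP => d.
have p : (0 < M - u + c)%N by move: uM => /ssrnat.ltP h1; apply/ssrnat.ltP; rewrite -!minusE -!plusE; lia.
have := dvdn_leq p d; rewrite leqNgt => /negP []. 
by move: uM uc => /ssrnat.ltP h1 /ssrnat.ltP h2; apply/ssrnat.ltP; rewrite -!minusE -!plusE; lia.
Qed.

Section Grading.
Variables (F : closedFieldType) (g : vectType F) (N : nat)
  (sigma : 'I_N -> 'End(g)) (m : 'I_N -> nat) (xi : 'I_N -> F).
Hypothesis hF : [pchar F] =i pred0.
Hypothesis hcomm : forall i j, (sigma i \o sigma j = sigma j \o sigma i)%VF.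
Hypothesis hord : forall i, has_order (sigma i) (m i).
Hypothesis hxi : forall i, (m i).-primitive_root (xi i).

Lemma m_gt0 i : (0 < m i)%N.
Proof. by case: (hord i). Qed.

Lemma xi_m i : xi i ^+ m i = 1.
Proof. exact: prim_expr_order. Qed.

Lemma xi_neq0 i : xi i != 0.
Proof.
apply/eqP => x0; have := xi_m i; rewrite x0 expr0n.
by rewrite eqn0Ngt m_gt0 /= => /eqP; rewrite eq_sym oner_eq0.
Qed.

Lemma m_neq0 i : ((m i)%:R : F) != 0.
Proof.
have /pcharf0P h : has_char0 F by [].
by rewrite h -lt0n m_gt0.
Qed.

Lemma xi_z i (z : int) : xi i ^ z = xi i ^+ `|(z %% (m i)%:Z)%Z|%N.
Proof.
rewrite {1}(divz_eq z (m i)%:Z) expfzDr ?xi_neq0 //.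
have -> : xi i ^ ((z %/ (m i)%:Z)%Z * (m i)%:Z) = 1.
  by rewrite mulrC -exprz_exp -exprnP xi_m exp1rz.
rewrite mul1r exprnP gez0_abs ?modz_ge0 //.
by rewrite eqz_nat -lt0n m_gt0.
Qed.

Lemma mod_lt i (z : int) : (`|(z %% (m i)%:Z)%Z| < m i)%N.
Proof.
rewrite -ltz_nat gez0_abs ?modz_ge0 ?eqz_nat -?lt0n ?m_gt0 //.
by rewrite -[X in (_ < X)]gez0_abs ?ltz_pmod // ltz_nat m_gt0.
Qed.

Lemma mem_grade k v : v \in grade sigma xi k <-> forall i, sigma i v = xi i ^ k i *: v.
Proof.
rewrite memvE; split.
  move/subv_bigcapP => h i; have := h i isT; rewrite -memvE memv_ker.
  by rewrite !(add_lfunE, opp_lfunE, scale_lfunE, id_lfunE) subr_eq0 => /eqP.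
move=> h; apply/subv_bigcapP => i _; rewrite -memvE memv_ker.
by rewrite !(add_lfunE, opp_lfunE, scale_lfunE, id_lfunE) h subrr.
Qed.

Lemma mem_gradeN k v : v \in grade sigma xi k <->
  forall i, sigma i v = xi i ^+ `|(k i %% (m i)%:Z)%Z|%N *: v.
Proof.
rewrite mem_grade; split=> h i; rewrite h ?xi_z //.
Qed.

Lemma grade_cls k : grade sigma xi (cls m k) = grade sigma xi k.
Proof.
apply/vspaceP => v; apply/idP/idP => /mem_gradeN h; apply/mem_gradeN => i;
  rewrite h ffunE; congr (_ ^+ _ *: _); congr (absz _); by rewrite modz_mod.
Qed.

Definition spow i s : 'End(g) := iter s (fun h => sigma i \o h)%VF \1%VF.

Lemma spowE i s v : spow i s v = iter s (sigma i) v.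
Proof. by elim: s => [|s IH] /=; rewrite ?id_lfunE // comp_lfunE -IH. Qed.

Lemma spow_m i v : spow i (m i) v = v.
Proof. by rewrite spowE; case: (hord i) => _ h _; apply: h. Qed.

Lemma spow_comm i j s v : sigma j (spow i s v) = spow i s (sigma j v).
Proof.
rewrite !spowE; elim: s => [|s IH] //=.
by rewrite -IH -!comp_lfunE hcomm.
Qed.

Lemma spow_eig i s v c : sigma i v = c *: v -> spow i s v = c ^+ s *: v.
Proof.
move=> h; rewrite spowE; elim: s => [|s IH] /=; first by rewrite scale1r.
by rewrite IH linearZ /= h scalerA exprSr.
Qed.

Definition pr i u : 'End(g) :=
  (m i)%:R^-1 *: \sum_(s < m i) xi i ^+ ((m i - u) * s) *: spow i s.

Lemma prE i u v : pr i u v =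
  (m i)%:R^-1 *: \sum_(s < m i) xi i ^+ ((m i - u) * s) *: spow i s v.
Proof.
rewrite scale_lfunE sum_lfunE; congr (_ *: _).
by apply: eq_bigr => s _; rewrite scale_lfunE.
Qed.

Lemma geom i (a : nat) : \sum_(s < m i) (xi i ^+ a) ^+ s =
  if (m i %| a)%N then (m i)%:R else 0.
Proof.
case: ifP => [d|nd].
  rewrite (prim_order_dvd (hxi i)) in d; rewrite (eqP d).
  by rewrite (eq_bigr (fun _ => 1)) ?sumr_const ?card_ord // => s _; rewrite expr1n.
have z1 : xi i ^+ a - 1 != 0.
  by rewrite subr_eq0 -(prim_order_dvd (hxi i)) nd.
apply: (mulfI z1); rewrite mulr0 -subrX1.
by rewrite exprAC xi_m expr1n subrr.
Qed.

Lemma pr_eig i u v c : (u < m i)%N -> (c < m i)%N ->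
  sigma i v = xi i ^+ c *: v -> pr i u v = (c == u)%:R *: v.
Proof.
move=> um cm h; rewrite prE.
rewrite (eq_bigr (fun s : 'I_(m i) => (xi i ^+ (m i - u + c)) ^+ s *: v)); last first.
  move=> s _; rewrite (spow_eig s h) scalerA; congr (_ *: _).
  by rewrite -!exprM -exprD mulnDl.
rewrite -scaler_suml geom scalerA.
rewrite dvd_aux //.
case: (c == u); last by rewrite mulr0.
by rewrite mulVf ?m_neq0.
Qed.

Lemma shift_sum (V : zmodType) (G : nat -> V) (M : nat) :
  \sum_(s < M) G s.+1 + G 0%N = \sum_(s < M) G s + G M.
Proof.
have := @big_ord_recl V 0 +%R M (fun s : 'I_M.+1 => G s).
rewrite big_ord_recr /= => e.
rewrite addrC; apply: etrans (esym e) _.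
by congr (_ + _); apply: eq_bigr => s _; rewrite lift0.
Qed.

Lemma spowS i s v : sigma i (spow i s v) = spow i s.+1 v.
Proof. by rewrite !spowE. Qed.

Lemma pr_comm i j u v : sigma j (pr i u v) = pr i u (sigma j v).
Proof.
rewrite !prE linearZ linear_sum /=; congr (_ *: _); apply: eq_bigr => s _.
by rewrite linearZ /= spow_comm.
Qed.

Lemma pr_sig i u v : (u < m i)%N -> sigma i (pr i u v) = xi i ^+ u *: pr i u v.
Proof.
move=> um; rewrite !prE linearZ linear_sum /= scalerA.
rewrite [_ / _]mulrC -scalerA; congr (_ *: _).
pose G (s : nat) := xi i ^+ ((m i - u) * s) *: spow i s v.
rewrite (eq_bigr (fun s : 'I_(m i) => xi i ^+ u *: G s.+1)); last first.
  move=> s _; rewrite linearZ /= spowS /G scalerA; congr (_ *: _).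
  by rewrite -exprD mulnS addnA (subnKC (ltnW um)) exprD xi_m mul1r.
rewrite -scaler_sumr; congr (_ *: _).
apply: (addIr (G 0%N)); rewrite shift_sum; congr (_ + _).
rewrite /G spow_m muln0 expr0 scale1r [spow i 0 v]spowE /=.
by rewrite mulnC exprM xi_m expr1n scale1r.
Qed.

Lemma coef_sum i (s : nat) : \sum_(u < m i) xi i ^+ ((m i - u) * s) =
  xi i ^+ s * (if (m i %| s)%N then (m i)%:R else 0).
Proof.
rewrite (reindex_inj rev_ord_inj) /= -geom mulr_sumr; apply: eq_bigr => u _.
by rewrite subKn // mulSn exprD mulnC exprM.
Qed.

Lemma pr_sum i v : \sum_(u < m i) pr i u v = v.
Proof.
rewrite (eq_bigr (fun u : 'I_(m i) => (m i)%:R^-1 *: \sum_(s < m i)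
   xi i ^+ ((m i - u) * s) *: spow i s v)); last by move=> u _; rewrite prE.
rewrite -scaler_sumr exchange_big /=.
rewrite (eq_bigr (fun s : 'I_(m i) => (xi i ^+ s * (if (m i %| s)%N then (m i)%:R else 0))
   *: spow i s v)); last by move=> s _; rewrite -coef_sum scaler_suml.
rewrite (bigD1 (Ordinal (m_gt0 i))) //= big1 ?addr0; last first.
  move=> s /eqP sn0; case: ifP => [d|]; last by rewrite mulr0 scale0r.
  exfalso; apply: sn0; apply: val_inj => /=; apply/eqP; rewrite -leqn0 leqNgt.
  by apply/negP => p; have := dvdn_leq p d; rewrite leqNgt ltn_ord.
by rewrite dvdn0 expr0 mul1r id_lfunE scalerA mulVf ?m_neq0 // scale1r.
Qed.

Definition EigL (l : seq 'I_N) (w : g) :=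
  exists t : 'I_N -> nat, forall i, i \in l -> sigma i w = xi i ^+ t i *: w.

Lemma span_l l v : exists ws : seq g,
  v = \sum_(w <- ws) w /\ forall w, w \in ws -> EigL l w.
Proof.
elim: l v => [|i l IH] v.
  exists [:: v]; split; first by rewrite big_seq1.
  by move=> w _; exists (fun _ => 0%N).
have [ws [-> hws]] := IH v.
exists [seq pr i u w | w <- ws, u <- iota 0 (m i)]; split.
  rewrite big_allpairs_dep; apply: eq_bigr => w _.
  have -> : iota 0 (m i) = index_iota 0 (m i) by rewrite /index_iota subn0.
  by rewrite big_mkord pr_sum.
move=> w' /allpairsP[[w u] /= [wws]]; rewrite mem_iota add0n => um ->.
have [t ht] := hws w wws.
exists (fun j => if j == i then u else t j) => j; rewrite in_cons.
case: eqP => [-> _|ji /= jl]; first by rewrite pr_sig.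
by rewrite pr_comm ht // linearZ.
Qed.

Lemma span_grade v : exists ws : seq g,
  v = \sum_(w <- ws) w /\ forall w, w \in ws -> exists t : Zn N, w \in grade sigma xi t.
Proof.
have [ws [-> hws]] := span_l (enum 'I_N) v.
exists ws; split=> // w /hws[t ht].
exists [ffun i => (t i)%:Z]; apply/mem_grade => i.
by rewrite ffunE ht ?mem_enum.
Qed.

Definition Qp (c : Zn N) : 'End(g) :=
  foldr (fun i acc => (pr i `|(c i %% (m i)%:Z)%Z|%N \o acc)%VF) \1%VF (enum 'I_N).

Lemma cls_all b c : (cls m b == cls m c) =
  all (fun i => `|(b i %% (m i)%:Z)%Z|%N == `|(c i %% (m i)%:Z)%Z|%N) (enum 'I_N).
Proof.
apply/eqP/allP => [h i _|h].
  by have := congr1 (fun f : Zn N => f i) h; rewrite /cls !ffunE => ->.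
apply/ffunP => i; rewrite !ffunE; have := h i (mem_enum _ i) => /eqP e.
have nz : ((m i)%:Z != 0) by rewrite eqz_nat -lt0n m_gt0.
by rewrite -[LHS]gez0_abs ?modz_ge0 // e gez0_abs ?modz_ge0.
Qed.

Lemma Qp_grade c b w : w \in grade sigma xi b ->
  Qp c w = (cls m b == cls m c)%:R *: w.
Proof.
move/mem_gradeN => hw; rewrite cls_all /Qp.
elim: (enum 'I_N) => [|i l IH] /=; first by rewrite id_lfunE scale1r.
rewrite comp_lfunE IH linearZ /= (pr_eig (mod_lt _ _) (mod_lt _ _) (hw i)).
by rewrite scalerA -natrM mulnb andbC.
Qed.

End Grading.

Section Main.
Variables (F : closedFieldType) (hF : [pchar F] =i pred0)
  (g : vectType F) (br : g -> g -> g) (hg : simple_lie br)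
  (N : nat) (sigma : 'I_N -> 'End(g)) (m : 'I_N -> nat) (xi : 'I_N -> F)
  (haut : forall i, lie_aut br (sigma i))
  (hcomm : forall i j, (sigma i \o sigma j = sigma j \o sigma i)%VF)
  (hord : forall i, has_order (sigma i) (m i))
  (hxi : forall i, (m i).-primitive_root (xi i))
  (I : (Zn N -> g) -> Prop) (hI : loop_ideal br sigma xi I).

Local Notation gr := (grade sigma xi).

Lemma hlie : is_lie_bracket br. Proof. by case: hg. Qed.

Lemma br_0r z : br z 0 = 0.
Proof.
have [_ h _ _] := hlie; have := h (-1) 0 0 z.
by rewrite scaler0 addr0 scaleN1r addNr.
Qed.

Lemma br_0l z : br 0 z = 0.
Proof.
have [h _ _ _] := hlie; have := h (-1) 0 0 z.
by rewrite scaler0 addr0 scaleN1r addNr.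
Qed.

Lemma br_Dr z x y : br z (x + y) = br z x + br z y.
Proof. by have [_ h _ _] := hlie; have := h 1 x y z; rewrite !scale1r. Qed.

Lemma br_Dl z x y : br (x + y) z = br x z + br y z.
Proof. by have [h _ _ _] := hlie; have := h 1 x y z; rewrite !scale1r. Qed.

Lemma br_Zr z a x : br z (a *: x) = a *: br z x.
Proof. by have [_ h _ _] := hlie; have := h a x 0 z; rewrite !addr0 br_0r addr0. Qed.

Lemma br_Zl z a x : br (a *: x) z = a *: br x z.
Proof. by have [h _ _ _] := hlie; have := h a x 0 z; rewrite !addr0 br_0l addr0. Qed.

Lemma ad_lfun y : exists f : 'End(g), forall v, f v = br y v.
Proof. by apply: lfun_of => a x z; rewrite br_Dr br_Zr. Qed.

Lemma br_grade d b y v : y \in gr d -> v \in gr b -> br y v \in gr (d + b).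
Proof.
move=> /(mem_grade sigma xi) hy /(mem_grade sigma xi) hv; apply/mem_grade => i.
have [_ ->] := haut i; rewrite hy hv br_Zl br_Zr scalerA ffunE expfzDr //.
by rewrite (xi_neq0 hord hxi).
Qed.

Lemma clsP (a b : Zn N) : cls m a = cls m b <-> forall i, ((m i)%:Z %| a i - b i)%Z.
Proof.
split=> [h i|h].
  by have := congr1 (fun f : Zn N => f i) h; rewrite !ffunE -eqz_mod_dvd => ->.
by apply/ffunP => i; rewrite !ffunE; apply/eqP; rewrite eqz_mod_dvd.
Qed.

Lemma cls_diff (a b c d : Zn N) : a - b = c - d -> cls m a = cls m b -> cls m c = cls m d.
Proof.
move=> e /clsP h; apply/clsP => i.
by have := congr1 (fun f : Zn N => f i) e; rewrite !ffunE => <-.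
Qed.

Definition Op (f : 'End(g)) (d : Zn N) (X : Zn N -> g) : Zn N -> g :=
  fun a => f (X (a - d)).
Definition Good f d := forall X, I X -> I (Op f d X).
Definition Hom (f : 'End(g)) (d : Zn N) := forall b v, v \in gr b -> f v \in gr (b + d).
Definition Good' f d := Hom f d /\ forall d', cls m d' = cls m d -> Good f d'.
Definition Aset f := exists s : seq ('End(g) * Zn N),
  (forall p, p \in s -> Good' p.1 p.2) /\ f = \sum_(p <- s) p.1.

Lemma Good_add f f' d : Good f d -> Good f' d -> Good (f + f') d.
Proof.
move=> h h' X IX; have [_ _ hD _ _] := hI.
have -> : Op (f + f') d X = fun a => Op f d X a + Op f' d X a.
  by apply: functional_extensionality => a; rewrite /Op add_lfunE.
by apply: hD; [apply: h | apply: h'].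
Qed.

Lemma Good_scale c f d : Good f d -> Good (c *: f) d.
Proof.
move=> h X IX; have [_ _ _ hZ _] := hI.
have -> : Op (c *: f) d X = fun a => c *: Op f d X a.
  by apply: functional_extensionality => a; rewrite /Op scale_lfunE.
by apply: hZ; apply: h.
Qed.

Lemma Good0 d : Good 0 d.
Proof.
move=> X IX; have [_ h0 _ _ _] := hI.
have -> : Op 0 d X = fun _ => 0.
  by apply: functional_extensionality => a; rewrite /Op zero_lfunE.
exact: h0.
Qed.

Lemma Good_comp f f' d1 d2 : Good f d1 -> Good f' d2 -> Good (f \o f')%VF (d1 + d2).
Proof.
move=> h h' X IX.
have -> : Op (f \o f')%VF (d1 + d2) X = Op f d1 (Op f' d2 X).
  apply: functional_extensionality => a; rewrite /Op comp_lfunE.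
  by rewrite opprD addrA.
by apply: h; apply: h'.
Qed.

Lemma Good_sum (T : eqType) (r : seq T) (Fp : T -> 'End(g)) d :
  (forall p, p \in r -> Good (Fp p) d) -> Good (\sum_(p <- r) Fp p) d.
Proof.
elim: r => [|p r IH] h; first by rewrite big_nil; apply: Good0.
rewrite big_cons; apply: Good_add; first by apply: h; rewrite mem_head.
by apply: IH => q hq; apply: h; rewrite inE hq orbT.
Qed.

Lemma Good'_comp f f' d1 d2 : Good' f d1 -> Good' f' d2 -> Good' (f \o f')%VF (d1 + d2).
Proof.
move=> [Hf Gf] [Hf' Gf']; split.
  move=> b v /Hf' /Hf; rewrite comp_lfunE.
  by rewrite -addrA [d2 + d1]addrC.
move=> d' hd'.
have -> : d' = (d' - d2) + d2 by rewrite subrK.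
apply: Good_comp; last by apply: Gf'.
apply: Gf; apply: (cls_diff _ hd').
by rewrite opprD addrA addrAC.
Qed.

Lemma Good'_scale c f d : Good' f d -> Good' (c *: f) d.
Proof.
move=> [Hf Gf]; split.
  by move=> b v /Hf h; rewrite scale_lfunE memvZ.
by move=> d' hd'; apply: Good_scale; apply: Gf.
Qed.

Lemma Aset_add f f' : Aset f -> Aset f' -> Aset (f + f').
Proof.
move=> [s [hs ->]] [s' [hs' ->]]; exists (s ++ s'); split; last by rewrite big_cat.
by move=> p; rewrite mem_cat => /orP[/hs|/hs'].
Qed.

Lemma Aset_scale c f : Aset f -> Aset (c *: f).
Proof.
move=> [s [hs ->]]; exists [seq (c *: p.1, p.2) | p <- s]; split.
  by move=> _ /mapP[p ps ->] /=; apply: Good'_scale; apply: hs.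
by rewrite big_map scaler_sumr.
Qed.

Lemma Aset_comp f f' : Aset f -> Aset f' -> Aset (f \o f')%VF.
Proof.
move=> [s [hs ->]] [s' [hs' ->]].
exists [seq ((p.1 \o q.1)%VF, p.2 + q.2) | p <- s, q <- s']; split.
  move=> _ /allpairsP[[p q] /= [ps qs ->]] /=.
  by apply: Good'_comp; [apply: hs | apply: hs'].
apply/lfunP => v; rewrite comp_lfunE.
rewrite (sum_lfunE s) (sum_lfunE s') (sum_lfunE [seq ((p.1 \o q.1)%VF, p.2 + q.2) | p <- s, q <- s']).
rewrite big_allpairs_dep /=.
apply: eq_bigr => p _; rewrite linear_sum /=.
by apply: eq_bigr => q _; rewrite comp_lfunE.
Qed.

Lemma addeq (d b k : Zn N) : (d + b == k) = (b == k - d).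
Proof. by rewrite [RHS]eq_sym subr_eq eq_sym addrC. Qed.

Lemma Good_ad w d (f : 'End(g)) : w \in gr d -> (forall v, f v = br w v) -> Good f d.
Proof.
move=> wd hf X IX.
have [hL _ _ _ hB] := hI.
have [[s2 s2X] _] := hL X IX.
pose Xw := fun a : Zn N => if a == d then w else 0.
have LXw : inLoop sigma xi Xw.
  split; first by exists [:: d] => k; rewrite inE /Xw => /negPf ->.
  by move=> k; rewrite /Xw; case: eqP => [->|]; rewrite ?mem0v.
have sXw : supported Xw [:: d] by move=> k; rewrite inE /Xw => /negPf ->.
have := hB Xw X [:: d] s2 LXw sXw IX s2X.
congr I; apply: functional_extensionality => k.
rewrite /loop_br /Op /= big_seq1 /Xw eqxx hf big_mkcond /=.
case: (boolP (k - d \in s2)) => ks.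
  rewrite (bigD1_seq (k - d)) ?undup_uniq ?mem_undup //=.
  rewrite addeq eqxx big1 ?addr0 // => b /negPf bn.
  by rewrite addeq bn.
rewrite s2X // br_0r big1_seq // => b /andP[_ bs]; case: ifP => // e.
by move: e bs ks; rewrite addeq => /eqP ->; rewrite mem_undup => ->.
Qed.

Lemma Good'_ad w t (f : 'End(g)) : w \in gr t -> (forall v, f v = br w v) -> Good' f t.
Proof.
move=> wt hf; split.
  by move=> b v vb; rewrite hf addrC; apply: br_grade.
move=> d' hd'; apply: (Good_ad (w := w)) => //.
by rewrite -(grade_cls hord hxi d') hd' (grade_cls hord hxi).
Qed.


Lemma Aset_ad y (f : 'End(g)) : (forall v, f v = br y v) -> Aset f.
Proof.
have [ws [ey hws]] := span_grade hF hcomm hord hxi y.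
move: f; rewrite ey; clear ey.
elim: ws hws => [|w ws IH] hws f hf.
  have -> : f = 0 by apply/lfunP => v; rewrite hf big_nil br_0l zero_lfunE.
  by exists [::]; split => //; rewrite big_nil.
have [fw hfw] := ad_lfun w.
have [fr hfr] := ad_lfun (\sum_(x <- ws) x).
have -> : f = fw + fr by apply/lfunP => v; rewrite hf add_lfunE hfw hfr big_cons br_Dl.
apply: Aset_add.
  have [t wt] := hws w (mem_head _ _).
  exists [:: (fw, t)]; split; last by rewrite big_seq1.
  by move=> p; rewrite inE => /eqP -> /=; apply: (Good'_ad wt).
by apply: IH => // x xs; apply: hws; rewrite inE xs orbT.
Qed.

Lemma Aset_irr (U : {vspace g}) :
  (forall f u, Aset f -> u \in U -> f u \in U) -> U = 0%VS \/ U = fullv.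
Proof.
move=> h; have [_ _ hs] := hg; apply: hs => x u uU.
have [f hf] := ad_lfun x; rewrite -hf; apply: h => //; exact: Aset_ad hf.
Qed.

Lemma Aset_nz : exists f, Aset f /\ f != 0.
Proof.
have [_ [x [y nz]] _] := hg; have [f hf] := ad_lfun x.
exists f; split; first exact: Aset_ad hf.
by apply: contra nz => /eqP f0; rewrite -hf f0 zero_lfunE.
Qed.

Lemma diff_shift (b x y : Zn N) : (b + x) - (b + y) = x - y.
Proof. by rewrite opprD addrACA subrr add0r. Qed.

Lemma main_res (B : Zn N -> seq g)
  (hB : forall k, basis_of (gr (cls m k)) (B (cls m k)))
  (Y : Zn N -> g) (hY : I Y) (k l : Zn N) (i : 'I_(size (B (cls m k))))
  (j : 'I_(size (B (cls m l)))) :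
  I (fun a => pcoord m B (cls m l) j Y (a - (k - l)) *: (B (cls m k))`_i).
Proof.
set z := (B (cls m k))`_i.
set Bl := in_tuple (B (cls m l)).
have [e he] : exists e : 'End(g), forall v, e v = coord Bl j (Qp sigma m xi l v) *: z.
  apply: lfun_of => c x y.
  by rewrite linearP /= linearP /= scalerDl scalerA.
have [T [AT T0 Tmin]] := A_minrank Aset_nz.
have Ae : Aset e.
  apply: (rank1_in Aset_add Aset_scale Aset_comp Aset_nz Aset_irr AT T0 Tmin (z := z)).
  by move=> v; rewrite he memvZ ?memv_line.
have [s [hs es]] := Ae.
pose s' := [seq p <- s | cls m p.2 == cls m (k - l)].
have Gphi : Good (\sum_(p <- s') p.1) (k - l).
  apply: Good_sum => p; rewrite mem_filter => /andP[/eqP cl ps].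
  by apply: (proj2 (hs p ps)); rewrite cl.
suff -> : (fun a => pcoord m B (cls m l) j Y (a - (k - l)) *: z) =
    Op (\sum_(p <- s') p.1) (k - l) Y by apply: Gphi.
apply: functional_extensionality => a.
rewrite /Op /pcoord; set b := a - (k - l).
have [hL _ _ _ _] := hI.
have [_ Yg] := hL Y hY; have Yb := Yg b.
have e1 : (if cls m b == cls m l then coord (in_tuple (B (cls m l))) j (Y b) else 0) *: z
    = e (Y b).
  rewrite he (Qp_grade hF hord hxi l Yb) linearZ /=.
  by case: (cls m b == cls m l); rewrite ?mul1r ?mul0r.
have zk : z \in gr k.
  rewrite -(grade_cls hord hxi k); apply: (basis_mem (hB k)).
  by rewrite mem_nth.
have eg : e (Y b) \in gr (b + (k - l)).
  rewrite he (Qp_grade hF hord hxi l Yb) linearZ /=.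
  case: eqP => [hb|_]; last by rewrite mul0r scale0r mem0v.
  apply: memvZ; rewrite -(grade_cls hord hxi (b + (k - l))).
  rewrite -(grade_cls hord hxi k) in zk.
  suff -> : cls m (b + (k - l)) = cls m k by [].
  apply: (cls_diff _ hb).
  by rewrite [in RHS]addrA [in RHS]addrAC addrK.
have eE : e (Y b) = Qp sigma m xi (b + (k - l)) (e (Y b)).
  by rewrite (Qp_grade hF hord hxi _ eg) eqxx scale1r.
rewrite e1 {1}eE.
rewrite es (sum_lfunE s) linear_sum (sum_lfunE s') big_filter [RHS]big_mkcond /=.
apply: eq_big_seq => p ps /=.
rewrite (Qp_grade hF hord hxi _ ((proj1 (hs p ps)) b (Y b) Yb)).
have -> : (cls m (b + p.2) == cls m (b + (k - l))) = (cls m p.2 == cls m (k - l)).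
  apply/eqP/eqP => h.
    by apply: (cls_diff _ h); rewrite diff_shift.
  by apply: (cls_diff _ h); rewrite diff_shift.
by case: (cls m p.2 == cls m (k - l)); rewrite ?scale1r ?scale0r.
Qed.

End Main.

Unset Implicit Arguments.
Set Strict Implicit.

Theorem lemma2p2 (F : closedFieldType) (hF : [pchar F] =i pred0)
  (g : vectType F) (br : g -> g -> g) (hg : simple_lie br)
  (N : nat) (sigma : 'I_N -> 'End(g)) (m : 'I_N -> nat) (xi : 'I_N -> F)
  (haut : forall i, lie_aut br (sigma i))
  (hcomm : forall i j, (sigma i \o sigma j = sigma j \o sigma i)%VF)
  (hord : forall i, has_order (sigma i) (m i))
  (hxi : forall i, (m i).-primitive_root (xi i))
  (B : Zn N -> seq g)
  (hB : forall k, basis_of (grade sigma xi (cls m k)) (B (cls m k)))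
  (I : (Zn N -> g) -> Prop) (hI : loop_ideal br sigma xi I)
  (Y : Zn N -> g) (hY : I Y) :
  forall (k l : Zn N) (i : 'I_(size (B (cls m k)))) (j : 'I_(size (B (cls m l)))),
    I (fun a => pcoord m B (cls m l) j Y (a - (k - l)) *: (B (cls m k))`_i).
Proof.
move=> k l i j.
exact: (main_res hF hg haut hcomm hord hxi hI hB hY).
Qed.
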